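(* Let $n,n'\in\mathbb{N}$ and let $\phi:\mathbb{N}^n\to\mathbb{N}^{n'}$ be a map that preserves joins and meets, i.e. $\phi(a\vee b)=\phi(a)\vee\phi(b)$ and $\phi(a\wedge b)=\phi(a)\wedge\phi(b)$ for all $a,b\in\mathbb{N}^n$. Then $\phi$ changes the Stanley depth by $n-n'$ with respect to any $g\in\mathbb{N}^n$ and $g':=\phi(g)$.
   Context: $\mathbb{N}^n$ carries the componentwise partial order, with $\vee$ and $\wedge$ the componentwise maximum and minimum; $[a,b]=\{c: a\le c\le b\}$; a map is monotonic if it preserves this order. A monotonic map $\phi:\mathbb{N}^n\to\mathbb{N}^{n'}$ changes the Stanley depth by $\ell\in\mathbb{Z}$ with respect to $g\in\mathbb{N}^n$ and $g'\in\mathbb{N}^{n'}$ if (1) $\phi(g)\le g'$, and (2) for every interval $[a',b']\subset[0,g']$, the set $\phi^{-1}([a',b'])\cap[0,g]$ is a finite disjoint union $\bigcup_i[a^i,b^i]$ of intervals with $\#\{j\in[n]: b^i_j=g_j\}\ge\#\{j\in[n']: b'_j=g'_j\}+\ell$ for all $i$. *)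

(* Defs.v *)
From mathcomp Require Import all_boot all_order all_algebra.
Set Implicit Arguments. Unset Strict Implicit. Unset Printing Implicit Defensive.

Definition vec (n : nat) := {ffun 'I_n -> nat}.

Definition vle n (a b : vec n) : bool := [forall i, a i <= b i].

Definition vjoin n (a b : vec n) : vec n := [ffun i => maxn (a i) (b i)].
Definition vmeet n (a b : vec n) : vec n := [ffun i => minn (a i) (b i)].

Definition vzero n : vec n := [ffun _ => 0].

Definition in_interval n (a b c : vec n) : Prop := vle a c /\ vle c b.

Definition monotonic n n' (phi : vec n -> vec n') : Prop :=
  forall a b, vle a b -> vle (phi a) (phi b).

Definition nmax n (b g : vec n) : nat := #|[set j | b j == g j]|.

Definition sdepth_decomp n (S : vec n -> Prop) (g : vec n) (k : int)
    (D : seq (vec n * vec n)) : Prop :=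
  (forall c, S c <-> exists2 p, p \in D & in_interval p.1 p.2 c) /\
  (forall i j c, (i < size D)%N -> (j < size D)%N -> i <> j ->
     in_interval (nth (vzero n, vzero n) D i).1 (nth (vzero n, vzero n) D i).2 c ->
     ~ in_interval (nth (vzero n, vzero n) D j).1 (nth (vzero n, vzero n) D j).2 c) /\
  (forall p, p \in D -> (k <= (nmax p.2 g)%:Z)%R).

Definition changes_sdepth n n' (phi : vec n -> vec n') (l : int)
    (g : vec n) (g' : vec n') : Prop :=
  monotonic phi /\
  vle (phi g) g' /\
  (forall a' b' : vec n',
     (forall c, in_interval a' b' c -> in_interval (vzero n') g' c) ->
     exists D : seq (vec n * vec n),
       sdepth_decomp (fun c => in_interval a' b' (phi c) /\ in_interval (vzero n) g c)
                     g ((nmax b' g')%:Z + l)%R D).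

(* Main.v *)
Require Import Defs.
From mathcomp Require Import all_boot all_order all_algebra.
From mathcomp Require Import zify.
Set Implicit Arguments. Unset Strict Implicit. Unset Printing Implicit Defensive.

Lemma vleP n (a b : vec n) : reflect (forall i, a i <= b i) (vle a b).
Proof. exact: forallP. Qed.

Lemma vle_refl n (a : vec n) : vle a a.
Proof. by apply/vleP. Qed.

Lemma vle_trans n (a b c : vec n) : vle a b -> vle b c -> vle a c.
Proof. by move=> /vleP h1 /vleP h2; apply/vleP=> i; exact: leq_trans (h1 i) (h2 i). Qed.

Lemma vle0 n (a : vec n) : vle (vzero n) a.
Proof. by apply/vleP=> i; rewrite ffunE. Qed.

Lemma vle_joinl n (a b : vec n) : vle a (vjoin a b).
Proof. by apply/vleP=> i; rewrite ffunE leq_maxl. Qed.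
Lemma vle_joinr n (a b : vec n) : vle b (vjoin a b).
Proof. by apply/vleP=> i; rewrite ffunE leq_maxr. Qed.
Lemma vle_meetl n (a b : vec n) : vle (vmeet a b) a.
Proof. by apply/vleP=> i; rewrite ffunE geq_minl. Qed.
Lemma vle_meetr n (a b : vec n) : vle (vmeet a b) b.
Proof. by apply/vleP=> i; rewrite ffunE geq_minr. Qed.
Lemma vjoin_le n (a b c : vec n) : vle a c -> vle b c -> vle (vjoin a b) c.
Proof. by move=> /vleP h1 /vleP h2; apply/vleP=> i; rewrite ffunE geq_max h1 h2. Qed.
Lemma vmeet_le n (a b c : vec n) : vle c a -> vle c b -> vle c (vmeet a b).
Proof. by move=> /vleP h1 /vleP h2; apply/vleP=> i; rewrite ffunE leq_min h1 h2. Qed.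

Lemma top_exists (T : eqType) (P : pred T) (le : rel T) (op : T -> T -> T)
 (hop : forall x y, P x -> P y -> P (op x y))
 (hl : forall x y, le x (op x y)) (hr : forall x y, le y (op x y))
 (htr : forall x y z, le x y -> le y z -> le x z) (hrefl: forall x, le x x)
 (L : seq T) : has P L -> exists2 t, P t & forall c, c \in L -> P c -> le c t.
Proof.
elim: L => //= x L IH.
case Px: (P x) => /=.
- case hL: (has P L).
  + case: (IH hL) => t Pt Ht; exists (op x t); first by apply: hop.
    move=> c; rewrite inE => /orP [/eqP -> _ | cL Pc]; first exact: hl.
    exact: htr (Ht c cL Pc) (hr _ _).
  + exists x => // c; rewrite inE => /orP [/eqP -> _ | cL Pc]; first exact: hrefl.
    have : has P L by apply/hasP; exists c.
    by rewrite hL.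
- move=> hL; case: (IH hL) => t Pt Ht; exists t => // c.
  rewrite inE => /orP [/eqP -> | cL Pc]; [by rewrite Px | exact: Ht].
Qed.

Section Enum.
Variables (n : nat) (g : vec n).
Definition mg := \max_(i < n) g i.
Definition embed (h : {ffun 'I_n -> 'I_(mg.+1)}) : vec n := [ffun i => (h i : nat)].
Definition Lg : seq (vec n) := map embed (enum {ffun 'I_n -> 'I_(mg.+1)}).
Lemma in_Lg c : vle c g -> c \in Lg.
Proof.
move=> /vleP h.
have -> : c = embed [ffun i => inord (c i)].
  apply/ffunP=> i; rewrite !ffunE inordK //.
  by rewrite ltnS (leq_trans (h i)) // /mg (bigD1 i) //= leq_maxl.
by apply: map_f; rewrite mem_enum.
Qed.
End Enum.

Theorem theorem3p7 (n n' : nat) (phi : vec n -> vec n')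
  (hjoin : forall a b : vec n, phi (vjoin a b) = vjoin (phi a) (phi b))
  (hmeet : forall a b : vec n, phi (vmeet a b) = vmeet (phi a) (phi b))
  (g : vec n) :
  changes_sdepth phi (n%:Z - n'%:Z)%R g (phi g).
Proof.
have mono : monotonic phi.
  move=> a b hab; have -> : b = vjoin a b.
    apply/ffunP=> i; rewrite ffunE; move/vleP: hab => /(_ i) h.
    by rewrite (maxn_idPr h).
  rewrite hjoin; exact: vle_joinl.
split => //; split; first exact: vle_refl.
move=> a' b' _.
pose Sb := fun c => [&& vle a' (phi c), vle (phi c) b', vle (vzero n) c & vle c g].
have SbE : forall c, (in_interval a' b' (phi c) /\ in_interval (vzero n) g c) <-> Sb c.
  move=> c; rewrite /Sb /in_interval; split => [[[-> ->] [-> ->]] // | /and4P [? ? ? ?]]; by [].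
case hS: (has Sb (Lg g)); last first.
  exists [::]; split; [|split].
  - move=> c; rewrite SbE; split => [hc|[p]]; last by rewrite in_nil.
    have : has Sb (Lg g) by apply/hasP; exists c => //; apply: in_Lg; case/and4P: hc.
    by rewrite hS.
  - by [].
  - by move=> p; rewrite in_nil.
have closJ : forall x y, Sb x -> Sb y -> Sb (vjoin x y).
  move=> x y /and4P [x1 x2 _ x4] /and4P [y1 y2 _ y4]; apply/and4P; split.
  - rewrite hjoin; exact: vle_trans x1 (vle_joinl _ _).
  - by rewrite hjoin; apply: vjoin_le.
  - exact: vle0.
  - exact: vjoin_le.
have closM : forall x y, Sb x -> Sb y -> Sb (vmeet x y).
  move=> x y /and4P [x1 x2 _ x4] /and4P [y1 y2 _ y4]; apply/and4P; split.
  - by rewrite hmeet; apply: vmeet_le.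
  - rewrite hmeet; exact: vle_trans (vle_meetl _ _) x2.
  - exact: vle0.
  - exact: vle_trans (vle_meetl _ _) x4.
have [b Sbb Hb] := top_exists closJ (@vle_joinl n) (@vle_joinr n) (@vle_trans n) (@vle_refl n) hS.
have [a Sba Ha] := top_exists (le := fun x y => vle y x) closM (@vle_meetl n) (@vle_meetr n)
   (fun x y z h1 h2 => vle_trans h2 h1) (@vle_refl n) hS.
exists [:: (a, b)]; split; [|split].
- move=> c; rewrite SbE; split => [hc | [p]].
  + exists (a,b); first by rewrite inE.
    have cL : c \in Lg g by apply: in_Lg; case/and4P: hc.
    split; [exact: Ha | exact: Hb].
  + rewrite inE => /eqP -> [/= hac hcb].
    case/and4P: Sba => a1 _ _ _; case/and4P: Sbb => _ b2 _ b4.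
    apply/and4P; split.
    * exact: vle_trans a1 (mono _ _ hac).
    * exact: vle_trans (mono _ _ hcb) b2.
    * exact: vle0.
    * exact: vle_trans hcb b4.
- by move=> [|i] [|j] c.
move=> p; rewrite inE => /eqP -> /=.
case/and4P: Sbb => b1 b2 _ b4.
pose A := [set i | b i != g i].
pose B := [set j | b' j != phi g j].
have h1 : nmax b g + #|A| = n.
  rewrite /nmax -[RHS](card_ord n) -(cardsC [set j | b j == g j]); congr (_ + _).
  by apply: eq_card => i; rewrite !inE.
have h2 : nmax b' (phi g) + #|B| = n'.
  rewrite /nmax -[RHS](card_ord n') -(cardsC [set j | b' j == phi g j]); congr (_ + _).
  by apply: eq_card => i; rewrite !inE.
pose bi := fun i => [ffun k => if k == i then (b k).+1 else b k] : vec n.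
have hf : forall i, i \in A -> exists j, [pick j | b' j < phi (bi i) j] = Some j /\ b' j < phi (bi i) j /\ vle (bi i) g.
  move=> i; rewrite inE => hi.
  have big : vle (bi i) g.
    apply/vleP => k; rewrite ffunE; case: eqP => [->|_]; last by move/vleP: (b4).
    have /vleP /(_ i) hb := b4.
    by rewrite ltn_neqAle hi.
  case: pickP => [j hj | hn]; first by exists j.
  exfalso.
  have hbb : vle b (bi i) by apply/vleP => k; rewrite ffunE; case: eqP.
  have nS : ~~ Sb (bi i).
    apply/negP => hS'; have := Hb _ (in_Lg big) hS'.
    by move/vleP => /(_ i); rewrite ffunE eqxx ltnn.
  move: nS; rewrite /Sb (vle_trans b1 (mono _ _ hbb)) vle0 big /= andbT.
  rewrite /vle negb_forall => /existsP [j]; rewrite -ltnNge.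
  by rewrite hn.
pose f := fun i => [pick j | b' j < phi (bi i) j].
have finj : {in A &, injective f}.
  move=> i k iA kA e.
  have [j [ej [hj _]]] := hf i iA; have [j' [ej' [hj' _]]] := hf k kA.
  rewrite /f ej ej' in e; case: e => ejj; subst j'.
  apply/eqP; apply/negP => ne.
  have em : vmeet (bi i) (bi k) = b.
    apply/ffunP => l; rewrite !ffunE.
    case: eqP => [eli|_]; case: eqP => [elk|_] //.
    - by subst; rewrite eqxx in ne.
    - by rewrite minnC; apply/minn_idPl; rewrite leqnSn.
    - by apply/minn_idPl; rewrite leqnSn.
    - by rewrite minnn.
  move/vleP: b2 => /(_ j); rewrite -em hmeet ffunE.
  by rewrite geq_min leqNgt hj leqNgt hj'.
have hsub : f @: A \subset Some @: B.
  apply/subsetP => o /imsetP [i iA ->].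
  have [j [ej [hj big]]] := hf i iA.
  rewrite /f ej; apply/imsetP; exists j => //; rewrite inE.
  move/vleP: (mono _ _ big) => /(_ j) h.
  by rewrite neq_ltn (leq_trans hj h).
have h3 : #|A| <= #|B|.
  rewrite -(card_in_imset finj) -(card_imset B (@Some_inj _)).
  exact: subset_leq_card.
lia.
Qed.
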